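(* In the restricted cut-and-choose setting described in the context, for every $\alpha\in\mathbb{R}$ and either choice of attack placement (before or after the delegated unitary), the overall acceptance probabilities satisfy $$|p_H-p_D^{\alpha}|\le \sqrt{1-\cos\!\left(\tfrac{\alpha}{2}\right)^{2N}}=\sqrt{1-\left(1-\sin\!\left(\tfrac{\alpha}{2}\right)^2\right)^{N}},$$ where $N=\sum_{n\ge 0} n\,\Omega(n)$ is the expected number of test rounds (assumed finite).
   Context: Restricted cut-and-choose setting. Fix $k\ge 1$ and let $\mathcal{X}=\mathbb{C}^{2^k}$. Let $P(\alpha)=\mathrm{diag}(1,e^{i\alpha})$ and $A_\alpha=\mathbb{1}_2^{\otimes(k-1)}\otimes P(\alpha)$ (phase rotation on the $k$-th qubit). Let $\Omega$ be a probability distribution on $\mathbb{N}=\{0,1,2,\dots\}$ (the number $n$ of test rounds), with finite mean $N=\sum_n n\,\Omega(n)$. For each $n\in\mathbb{N}$ and each round $i\in\{1,\dots,n+1\}$ there is a test (trap) unitary $T_{n,i}\in\mathrm{U}(\mathcal{X})$ and a test input unit vector $|\chi_{n,i}\rangle\in\mathcal{X}$; and for each $n$ a measurement operator $\mu_{k,n}$ on $\mathcal{X}^{\otimes n}$ with $0\le\mu_{k,n}\le \mathbb{1}$ (the ''accept'' outcome). The output round $\ell$ is uniform on $\{1,\dots,n+1\}$; all rounds $i\ne\ell$ are test rounds, and the round $\ell$ carries the client's computation. The phase attack with parameter $\alpha$ replaces each delegated unitary $T$ by $T^\alpha$, where either $T^\alpha=T A_\alpha$ for all rounds (attack before the unitary)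 or $T^\alpha=A_\alpha T$ for all rounds (attack after the unitary). Define $$p^H_{n,\ell}=\mathrm{Tr}\Big[\mu_{k,n}\bigotimes_{i\ne\ell} T_{n,i}|\chi_{n,i}\rangle\langle\chi_{n,i}|T_{n,i}^\dagger\Big],\qquad p^{D}_{n,\ell}=\mathrm{Tr}\Big[\mu_{k,n}\bigotimes_{i\ne\ell} T^\alpha_{n,i}|\chi_{n,i}\rangle\langle\chi_{n,i}|(T^\alpha_{n,i})^\dagger\Big],$$ (tensor products over $i\in\{1,\dots,n+1\}\setminus\{\ell\}$ in increasing order), and $$p_H=\sum_{n\ge0}\frac{\Omega(n)}{n+1}\sum_{\ell=1}^{n+1}p^H_{n,\ell},\qquad p_D^{\alpha}=\sum_{n\ge0}\frac{\Omega(n)}{n+1}\sum_{\ell=1}^{n+1}p^D_{n,\ell}.$$ *)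

(* Defs.v *)
From HB Require Import structures.
From mathcomp Require Import all_boot all_order all_algebra.
From mathcomp Require Import complex mxtens.
From mathcomp Require Import all_classical all_reals all_analysis.

Set Implicit Arguments.
Unset Strict Implicit.
Unset Printing Implicit Defensive.

Import Order.TTheory GRing.Theory Num.Theory.
Import numFieldNormedType.Exports.
Local Open Scope ring_scope.

Section Defs.
Variable R : realType.
Local Notation C := R[i].

Definition adj {m n} (A : 'M[C]_(m, n)) : 'M[C]_(n, m) := (map_mx Num.conj A)^T.

(* Loewner order:  A is positive semidefinite  iff  <v, A v> >= 0 for all v
   (in the order of C, 0 <= z means z is real and nonnegative). *)
Definition psdmx {n} (A : 'M[C]_n) : Prop :=
  forall v : 'cV[C]_n, 0 <= (adj v *m A *m v) 0 0.

Definition effect {n} (M : 'M[C]_n) : Prop := psdmx M /\ psdmx (1%:M - M).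

Definition unit_vec {n} (v : 'cV[C]_n) : Prop := adj v *m v = 1%:M.

Definition proj {n} (v : 'cV[C]_n) : 'M[C]_n := v *m adj v.

Fixpoint tens_pow {d} (m : nat) : ('I_m -> 'M[C]_d) -> 'M[C]_(d ^ m) :=
  match m return ('I_m -> 'M[C]_d) -> 'M[C]_(d ^ m) with
  | 0 => fun _ => 1%:M
  | m'.+1 => fun rho =>
      castmx (esym (expnS d m'), esym (expnS d m'))
        (tensmx (rho ord0) (tens_pow (fun j : 'I_m' => rho (lift ord0 j))))
  end.

Definition Pgate (a : R) : 'M[C]_2 :=
  \matrix_(i < 2, j < 2)
    (if (i == j) then (if i == 1 :> nat then (cos a +i* sin a)%C else 1) else 0).

(* A_alpha = 1_2^{(x)(k-1)} (x) P(alpha) on C^{2^k} (for k >= 1; the k = 0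
   branch is never used since the theorem assumes k >= 1). *)
Definition Aphase (k : nat) (a : R) : 'M[C]_(2 ^ k) :=
  match k return 'M[C]_(2 ^ k) with
  | 0 => 1%:M
  | k'.+1 => castmx (esym (expnSr 2 k'), esym (expnSr 2 k'))
               (tensmx (tens_pow (fun _ : 'I_k' => (1%:M : 'M[C]_2))) (Pgate a))
  end.

Definition attacked {d} (before : bool) (A T : 'M[C]_d) : 'M[C]_d :=
  if before then T *m A else A *m T.

(* p_{n,l} = Tr[ mu_n  (x)_{i <> l} U_{n,i} |chi_{n,i}><chi_{n,i}| U_{n,i}^dagger ],
   the tensor factors being the rounds i <> l in increasing order
   (lift l j enumerates {0..n} \ {l} increasingly for j : 'I_n). Rounds and l
   are 0-based here. The trace is real; we take its real part. *)
Definition acc_prob {d n} (mu : 'M[C]_(d ^ n)) (U : 'I_n.+1 -> 'M[C]_d)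
  (chi : 'I_n.+1 -> 'cV[C]_d) (l : 'I_n.+1) : R :=
  complex.Re (\tr (mu *m tens_pow (fun j : 'I_n =>
      U (lift l j) *m proj (chi (lift l j)) *m adj (U (lift l j))))).

Definition overall_prob (Omega : nat -> R) (f : forall n : nat, 'I_n.+1 -> R) : R :=
  limn (series ((fun n => Omega n / n.+1%:R * \sum_(l < n.+1) f n l) : R^nat)).

End Defs.

(* Main.v *)
Require Import Defs.
From HB Require Import structures.
From mathcomp Require Import all_boot all_order all_algebra.
From mathcomp Require Import complex mxtens.
From mathcomp Require Import all_classical all_reals all_analysis.
From mathcomp Require Import ring lra.
Import Order.TTheory GRing.Theory Num.Theory.
Import numFieldNormedType.Exports.
Local Open Scope ring_scope.
Local Open Scope classical_set_scope.
Section An.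
Variable R : realType.
Implicit Types u v : R^nat.

Lemma ser_ge0 u : (forall n, 0 <= u n) -> cvgn (series u) -> 0 <= limn (series u).
Proof.
move=> u0 cu; apply: limr_ge => //; apply: nearW => n.
by rewrite /series /=; apply: sumr_ge0 => i _.
Qed.

Lemma ser_cvg_le u v : (forall n, 0 <= u n <= v n) -> cvgn (series v) -> cvgn (series u).
Proof.
move=> uv cv; apply: (series_le_cvg _ _ _ cv).
- by move=> n; case/andP: (uv n).
- by move=> n; case/andP: (uv n) => /le_trans h /h.
- by move=> n; case/andP: (uv n).
Qed.

Lemma eqle (a b : R) : a = b -> a <= b. Proof. by move->. Qed.

Lemma sqrt_am (x y : R) : 0 <= x -> 0 < y -> Num.sqrt x <= (x + y) / (2 * Num.sqrt y).
Proof.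
move=> x0 y0.
have sy : 0 < Num.sqrt y by rewrite sqrtr_gt0.
rewrite ler_pdivlMr; last by rewrite mulr_gt0.
have hx := sqr_sqrtr x0; have hy := sqr_sqrtr (ltW y0).
have := sqrtr_ge0 x.
set a := Num.sqrt x in hx *; set b := Num.sqrt y in hy sy *.
rewrite -hx -hy => a0; have := sqr_ge0 (a - b); nra.
Qed.

Lemma jensen (Om h d : R^nat) (c2 : R) :
 (forall n, 0 <= Om n) -> series Om @ \oo --> (1:R) ->
 cvgn (series (fun n => n%:R * Om n)) -> 0 <= c2 <= 1 ->
 (forall n, 0 <= h n <= Om n) -> (forall n, 0 <= d n <= Om n) ->
 (forall n, `|h n - d n| <= Om n * Num.sqrt (1 - c2 ^+ n)) ->
 `|limn (series h) - limn (series d)| <=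
   Num.sqrt (1 - c2 `^ limn (series (fun n => n%:R * Om n))).
Proof.
move=> O0 HO cN /andP[c20 c21] hb db hd.
have cO : cvgn (series Om) := cvgP _ HO.
have lO : limn (series Om) = 1 by apply: cvg_lim.
set nO := (fun n => n%:R * Om n) in cN *.
set N := limn (series nO).
have cn n : 0 <= c2 ^+ n <= 1 by rewrite exprn_ge0 ?exprn_ile1.
pose g := fun n => Om n * Num.sqrt (1 - c2 ^+ n).
have g0 n : 0 <= g n <= Om n.
  rewrite /g mulr_ge0 ?sqrtr_ge0 //= ler_piMr //.
  case/andP: (cn n) => h1 h2.
  have : Num.sqrt (1 - c2 ^+ n) <= Num.sqrt 1 by rewrite ler_sqrt //; lra.
  by rewrite sqrtr1.
have cg : cvgn (series g) by apply: ser_cvg_le g0 cO.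
have ch : cvgn (series h) by apply: ser_cvg_le hb cO.
have cd : cvgn (series d) by apply: ser_cvg_le db cO.
have step1 : `|limn (series h) - limn (series d)| <= limn (series g).
  rewrite -lim_seriesB // ler_norml; apply/andP; split.
    rewrite -lim_seriesN //; apply: lim_series_le.
    - by rewrite is_cvg_seriesN.
    - exact: is_cvg_seriesB.
    - by move=> n; move: (hd n); rewrite ler_norml => /andP[].
  apply: lim_series_le => //; first exact: is_cvg_seriesB.
  by move=> n; move: (hd n); rewrite ler_norml => /andP[].
apply: (le_trans step1).
pose xO := fun n => Om n * (1 - c2 ^+ n).
have xO0 n : 0 <= xO n <= Om n.
  case/andP: (cn n) => h1 h2.
  rewrite /xO mulr_ge0 ?subr_ge0 //= ler_piMr //; lra.
have cxO : cvgn (series xO) by apply: ser_cvg_le xO0 cO.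
set Y := limn (series xO).
have Y0 : 0 <= Y by apply: ser_ge0 => // n; case/andP: (xO0 n).
have claimA : limn (series g) <= Num.sqrt Y.
  have key y : 0 < y -> limn (series g) <= (Y + y) / (2 * Num.sqrt y).
    move=> y0.
    have cc : cvgn (series ((2 * Num.sqrt y)^-1 *: (xO + y *: Om))).
      by apply: is_cvg_seriesZ; apply: is_cvg_seriesD => //; apply: is_cvg_seriesZ.
    have -> : (Y + y) / (2 * Num.sqrt y) =
        limn (series ((2 * Num.sqrt y)^-1 *: (xO + y *: Om))).
      rewrite lim_seriesZ; last by apply: is_cvg_seriesD => //; apply: is_cvg_seriesZ.
      rewrite lim_seriesD //; last by apply: is_cvg_seriesZ.
      rewrite lim_seriesZ // lO /= -/Y mulrC; congr (_ * (_ + _)); first [ by rewrite /GRing.scale /= mulr1 | by rewrite -[RHS]mulr1 mulr_algl | by rewrite -[LHS]mulr1 -(scaler1 y) ].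
    apply: (@lim_series_le R g) => // n /=.
    rewrite /g /xO.
    case/andP: (cn n) => h1 h2.
    have hh : 0 <= 1 - c2 ^+ n by rewrite subr_ge0.
    have := sqrt_am _ _ hh y0.
    move=> H; have := ler_wpM2l (O0 n) H.
    move=> H2; apply: (le_trans H2); rewrite le_eqVlt; apply/orP; left; apply/eqP.
    change (Om n * ((1 - c2 ^+ n + y) / (2 * Num.sqrt y)) = (2 * Num.sqrt y)^-1 * (Om n * (1 - c2 ^+ n) + y * Om n)).
    have : 0 < Num.sqrt y by rewrite sqrtr_gt0.
    move=> ?; field; lra.
  have Sge0 : 0 <= limn (series g) by apply: ser_ge0 => // n; case/andP: (g0 n).
  have [Ypos|] := ltP 0 Y.
    apply: (le_trans (key _ Ypos)).
    have sy : 0 < Num.sqrt Y by rewrite sqrtr_gt0.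
    have hy := sqr_sqrtr Y0.
    rewrite -{1 2}hy; apply: eqle; field; lra.
  move=> Yle0; have Yeq : Y = 0 by apply/le_anti; rewrite Yle0 Y0.
  rewrite Yeq sqrtr0.
  case: (leP (limn (series g)) 0) => // Spos.
  have := key _ (exprn_gt0 2 Spos).
  rewrite Yeq add0r sqrtr_sqr gtr0_norm //.
  set S := limn (series g) in Spos *.
  have -> : S ^+ 2 / (2 * S) = S / 2 by field; lra.
  lra.
apply: (le_trans claimA).
pose Pf := fun n => Om n * c2 ^+ n.
have Pf0 n : 0 <= Pf n <= Om n.
  case/andP: (cn n) => h1 h2.
  by rewrite /Pf mulr_ge0 //= ler_piMr.
have cP : cvgn (series Pf) by apply: ser_cvg_le Pf0 cO.
have YE : Y = 1 - limn (series Pf).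
  rewrite /Y; have -> : xO = Om - Pf.
    apply/funext => n; rewrite /xO /Pf.
    change (Om n * (1 - c2 ^+ n) = Om n - Om n * c2 ^+ n); ring.
  by rewrite lim_seriesB // lO.
have cnO : forall n, 0 <= nO n by move=> n; rewrite /nO mulr_ge0.
have N0 : 0 <= N by apply: ser_ge0.
have claimB : c2 `^ N <= limn (series Pf).
  have [c0|c0] := eqVneq c2 0.
    have [Ne0|Nn0] := eqVneq N 0.
      rewrite Ne0 powRr0.
      have cF : cvgn (series (Om - nO)) by apply: is_cvg_seriesB.
      have <- : limn (series (Om - nO)) = 1.
        by rewrite lim_seriesB // lO -/N Ne0 subr0.
      apply: lim_series_le => // n.
      change (Om n - n%:R * Om n <= Om n * c2 ^+ n).
      rewrite c0; case: n => [|n]; first by rewrite expr0 mul0r subr0 mulr1.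
      rewrite expr0n /= mulr0 subr_le0 -[X in X <= _]mul1r ler_wpM2r //.
      by rewrite ler1n.
    by rewrite c0 powR0 //; apply: ser_ge0 => // n; case/andP: (Pf0 n).
  have c2pos : 0 < c2 by rewrite lt_def c0.
  set L := ln c2.
  have EE : c2 `^ N = expR (N * L) by rewrite /powR (negbTE c0).
  set E := c2 `^ N in EE *.
  have E0 : 0 <= E by apply: powR_ge0.
  have cF : cvgn (series ((E * (1 - N * L)) *: Om + (E * L) *: nO)).
    by apply: is_cvg_seriesD; apply: is_cvg_seriesZ.
  have <- : limn (series ((E * (1 - N * L)) *: Om + (E * L) *: nO)) = E.
    rewrite lim_seriesD; try by apply: is_cvg_seriesZ.
    rewrite !lim_seriesZ // lO -/N /=.
    change (E * (1 - N * L) * 1 + E * L * N = E); ring.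
  apply: lim_series_le => // n.
  change (E * (1 - N * L) * Om n + E * L * (n%:R * Om n) <= Om n * c2 ^+ n).
  have X1 : c2 ^+ n = expR (n%:R * L) by rewrite -powR_mulrn ?ltW // /powR (negbTE c0).
  have X2 : expR (n%:R * L) = E * expR ((n%:R - N) * L).
    by rewrite EE -expRD; congr expR; ring.
  have X3 := expR_ge1Dx ((n%:R - N) * L).
  rewrite X1 X2.
  have X4 : 0 <= Om n * E by rewrite mulr_ge0.
  set Z := expR _ in X3 *.
  have X5 : 0 <= Om n * E * (Z - (1 + (n%:R - N) * L)) by rewrite mulr_ge0 // subr_ge0.
  nra.
rewrite ler_sqrt; first by rewrite YE; lra.
lra.
Qed.
End An.
Set Implicit Arguments. Unset Strict Implicit. Unset Printing Implicit Defensive.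
Section Q.
Variable R : realType.
Local Notation C := R[i].
Local Notation cRe := (@complex.Re R).
Local Notation cIm := (@complex.Im R).

Fixpoint tpr {d p : nat} (m : nat) : ('I_m -> 'M[C]_(d, p)) -> 'M[C]_(d ^ m, p ^ m) :=
  match m return ('I_m -> 'M[C]_(d, p)) -> 'M[C]_(d ^ m, p ^ m) with
  | 0 => fun _ => 1%:M
  | m'.+1 => fun rho =>
      castmx (esym (expnS d m'), esym (expnS p m'))
        (tensmx (rho ord0) (tpr (fun j : 'I_m' => rho (lift ord0 j))))
  end.

Lemma tens_pow_tpr d m (rho : 'I_m -> 'M[C]_d) : tens_pow rho = tpr rho.
Proof. by elim: m rho => //= m IH rho; rewrite IH. Qed.

Lemma castmx_mul3 m m' n n' p p' (em : m = m') (en : n = n') (ep : p = p')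
  (X : 'M[C]_(m, n)) (Y : 'M[C]_(n, p)) :
  castmx (em, en) X *m castmx (en, ep) Y = castmx (em, ep) (X *m Y).
Proof. by subst. Qed.

Lemma adj_cast m m' n n' (em : m = m') (en : n = n') (X : 'M[C]_(m, n)) :
  adj (castmx (em, en) X) = castmx (en, em) (adj X).
Proof. by subst; rewrite !castmx_id. Qed.

Lemma adjM m n p (A : 'M[C]_(m, n)) (B : 'M[C]_(n, p)) :
  adj (A *m B) = adj B *m adj A.
Proof. by rewrite /adj map_mxM trmx_mul. Qed.

Lemma adjK m n (A : 'M[C]_(m, n)) : adj (adj A) = A.
Proof.
by apply/matrixP => i j; rewrite !mxE conjCK.
Qed.

Lemma adj_tens m n p q (A : 'M[C]_(m, n)) (B : 'M[C]_(p, q)) :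
  adj (A *t B) = adj A *t adj B.
Proof. by rewrite /adj (map_mxT Num.conj) trmx_tens. Qed.

Lemma tprM d p q m (A : 'I_m -> 'M[C]_(d, p)) (B : 'I_m -> 'M[C]_(p, q)) :
  tpr A *m tpr B = tpr (fun j => A j *m B j).
Proof.
elim: m A B => [|m IH] A B /=; first by rewrite mulmx1.
by rewrite castmx_mul3 tensmx_mul IH.
Qed.

Lemma tpr_adj d p m (A : 'I_m -> 'M[C]_(d, p)) :
  adj (tpr A) = tpr (fun j => adj (A j)).
Proof.
elim: m A => [|m IH] A /=.
  apply/matrixP => i j; rewrite !mxE conjC_nat. by rewrite (ord1 i) (ord1 j).
by rewrite (adj_cast (esym (expnS d m))) adj_tens IH.
Qed.

Lemma tpr11 m (z : 'I_m -> 'M[C]_1) (i j : 'I_(1 ^ m)) :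
  tpr z i j = \prod_(k < m) z k 0 0.
Proof.
elim: m z i j => [|m IH] z i j /=.
  by rewrite big_ord0 !ord1 mxE.
rewrite castmxE mxE IH big_ord_recl; congr (_ * _).
by rewrite !ord1.
Qed.


Definition Qf {n} (M : 'M[C]_n) (x y : 'cV[C]_n) : C := (adj x *m M *m y) 0 0.

Lemma adjD m n (A B : 'M[C]_(m, n)) : adj (A + B) = adj A + adj B.
Proof. by rewrite /adj map_mxD linearD. Qed.

Lemma adjN m n (A : 'M[C]_(m, n)) : adj (- A) = - adj A.
Proof. by rewrite /adj map_mxN linearN. Qed.

Lemma adjZ m n c (A : 'M[C]_(m, n)) : adj (c *: A) = Num.conj c *: adj A.
Proof. by rewrite /adj map_mxZ linearZ. Qed.

Lemma adj11 (A : 'M[C]_1) : adj A 0 0 = Num.conj (A 0 0).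
Proof. by rewrite !mxE. Qed.

Section QfS.
Variable n : nat.
Implicit Types (M : 'M[C]_n) (x y z : 'cV[C]_n).

Lemma QfDl M x y z : Qf M (x + y) z = Qf M x z + Qf M y z.
Proof. by rewrite /Qf adjD !mulmxDl mxE. Qed.
Lemma QfDr M x y z : Qf M x (y + z) = Qf M x y + Qf M x z.
Proof. by rewrite /Qf !mulmxDr mxE. Qed.
Lemma QfNl M x y : Qf M (- x) y = - Qf M x y.
Proof. by rewrite /Qf adjN !mulNmx mxE. Qed.
Lemma QfNr M x y : Qf M x (- y) = - Qf M x y.
Proof. by rewrite /Qf !mulmxN mxE. Qed.
Lemma QfZl M c x y : Qf M (c *: x) y = Num.conj c * Qf M x y.
Proof. by rewrite /Qf adjZ -!scalemxAl mxE. Qed.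
Lemma QfZr M c x y : Qf M x (c *: y) = c * Qf M x y.
Proof. by rewrite /Qf -!scalemxAr mxE. Qed.
Lemma Qf1B M x y : Qf (1%:M - M) x y = Qf 1%:M x y - Qf M x y.
Proof. by rewrite /Qf mulmxBr mulmxBl !mxE. Qed.
Lemma Qf_conj M x y : Qf 1%:M y x = Num.conj (Qf 1%:M x y).
Proof. by rewrite /Qf !mulmx1 -adj11 adjM adjK. Qed.
End QfS.


Lemma ReD (a b : C) : cRe (a + b) = cRe a + cRe b.
Proof. by case: a => ? ?; case: b => ? ?. Qed.
Lemma ReN (a : C) : cRe (- a) = - cRe a.
Proof. by case: a => ? ?. Qed.
Lemma ReB (a b : C) : cRe (a - b) = cRe a - cRe b.
Proof. by rewrite ReD ReN. Qed.
Lemma ReMr (t : R) (z : C) : cRe (t%:C%C * z) = t * cRe z.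
Proof. by case: z => a b /=; rewrite mul0r subr0. Qed.
Lemma Re_conj (z : C) : cRe (Num.conj z) = cRe z.
Proof. by case: z => ? ?. Qed.
Lemma conjR (t : R) : Num.conj (t%:C%C : C) = t%:C%C.
Proof. exact: conjc_real. Qed.
Lemma ge0C (z : C) : 0 <= z -> cIm z = 0 /\ 0 <= cRe z.
Proof. by rewrite lecE => /andP[/eqP h1 h2]; split; [exact: h1 | exact: h2]. Qed.

Lemma disc (a b c : R) : 0 <= b -> (forall t, 0 <= a + t * c + t ^+ 2 * b) ->
  c ^+ 2 <= 4 * a * b.
Proof.
move=> b0 H; have a0 := H 0; rewrite mul0r expr0n /= mul0r !addr0 in a0.
have [bz|bpos] := eqVneq b 0.
  rewrite bz mulr0.
  have [cz|cnz] := eqVneq c 0; first by rewrite cz expr0n.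
  have := H (- (a + 1) / c); rewrite bz mulr0 addr0 divfK //.
  lra.
have bp : 0 < b by rewrite lt_def bpos.
have := H (- c / (2 * b)).
have -> : a + - c / (2 * b) * c + (- c / (2 * b)) ^+ 2 * b = a - c ^+ 2 / (4 * b).
  by field; lra.
rewrite subr_ge0 ler_pdivrMr; last by lra.
lra.
Qed.

Lemma quad_psd m (B : 'M[C]_m) (u v : 'cV[C]_m) : psdmx B ->
  cRe (Qf B u v + Qf B v u) ^+ 2 <= 4 * cRe (Qf B u u) * cRe (Qf B v v).
Proof.
move=> psdB; apply: disc; first by case: (ge0C (psdB v)).
move=> t; case: (ge0C (psdB (u + t%:C%C *: v))) => _.
change (0 <= cRe (Qf B (u + t%:C%C *: v) (u + t%:C%C *: v)) -> 0 <= cRe (Qf B u u) + t * cRe (Qf B u v + Qf B v u) + t ^+ 2 * cRe (Qf B v v)).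
rewrite QfDl !QfDr !QfZl !QfZr conjR !ReD !ReMr.
move=> h; apply: (le_trans h); rewrite le_eqVlt; apply/orP; left; apply/eqP; ring.
Qed.


Lemma real_aux (a b a' b' P : R) : 0 <= a -> 0 <= b -> 0 <= a' -> 0 <= b' -> 0 <= P ->
  P <= a * b -> P <= a' * b' -> 4 * P <= (a + a') * (b + b').
Proof.
move=> a0 b0 a'0 b'0 P0 h1 h2.
have uv : P * P <= (a * b') * (a' * b).
  have -> : (a * b') * (a' * b) = (a * b) * (a' * b') by ring.
  by apply: ler_pM.
have u0 : 0 <= a * b' by apply: mulr_ge0.
have v0 : 0 <= a' * b by apply: mulr_ge0.
suff : 2 * P <= a * b' + a' * b by nra.
set u := a * b' in uv u0 *; set v := a' * b in uv v0 *.
have : (2 * P) ^+ 2 <= (u + v) ^+ 2.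
  have := sqr_ge0 (u - v); nra.
rewrite ler_sqr // ?nnegrE; lra.
Qed.

Lemma KL0 m (M : 'M[C]_m) (x y : 'cV[C]_m) : effect M ->
  Qf 1%:M x x = 1 -> Qf 1%:M y y = 1 ->
  (cRe (Qf M x x) - cRe (Qf M y y)) ^+ 2 <= 1 - cRe (Qf 1%:M x y) ^+ 2.
Proof.
case=> psdM psd1M hx hy.
set d := x - y; set s := x + y.
have E1 B : Qf B d s + Qf B s d = (Qf B x x - Qf B y y) + (Qf B x x - Qf B y y).
  rewrite /d /s !QfDl !QfDr !QfNl !QfNr; ring.
have E2 : Qf 1%:M d d = Qf 1%:M x x + Qf 1%:M y y - Qf 1%:M x y - Qf 1%:M y x.
  rewrite /d /s !QfDl !QfDr !QfNl !QfNr; ring.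
have E3 : Qf 1%:M s s = Qf 1%:M x x + Qf 1%:M y y + Qf 1%:M x y + Qf 1%:M y x.
  rewrite /s !QfDl !QfDr; ring.
have hM := quad_psd d s psdM.
have h1M := quad_psd d s psd1M.
have a0 : 0 <= cRe (Qf M d d) by case: (ge0C (psdM d)).
have b0 : 0 <= cRe (Qf M s s) by case: (ge0C (psdM s)).
have a'0 : 0 <= cRe (Qf (1%:M - M) d d) by case: (ge0C (psd1M d)).
have b'0 : 0 <= cRe (Qf (1%:M - M) s s) by case: (ge0C (psd1M s)).
rewrite !Qf1B in h1M a'0 b'0.
have E4 : Qf 1%:M d s - Qf M d s + (Qf 1%:M s d - Qf M s d) =
          (Qf 1%:M d s + Qf 1%:M s d) - (Qf M d s + Qf M s d) by ring.
rewrite E4 !E1 hx hy subrr addr0 sub0r in h1M.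
rewrite E1 in hM.
rewrite E2 E3 hx hy (Qf_conj M x y) in a'0 b'0 h1M.
rewrite !(ReD, ReB, ReN, Re_conj) in hM h1M a'0 b'0.
have Re1 : cRe 1 = 1 by [].
rewrite Re1 in a'0 b'0 h1M.
set X := cRe (Qf M x x) - cRe (Qf M y y) in hM h1M *.
set r := cRe (Qf 1%:M x y) in a'0 b'0 h1M *.
set a := cRe (Qf M d d) in a0 a'0 hM h1M *.
set b := cRe (Qf M s s) in b0 b'0 hM h1M *.
set a' := 1 + 1 - r - r - a in a'0 h1M.
set b' := 1 + 1 + r + r - b in b'0 h1M.
have hab : X ^+ 2 <= a * b by nra.
have ha'b' : X ^+ 2 <= a' * b' by nra.
have := real_aux a0 b0 a'0 b'0 (sqr_ge0 X) hab ha'b'.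
rewrite /a' /b'; nra.
Qed.


Definition nsq (z : C) : R := cRe z ^+ 2 + cIm z ^+ 2.

Lemma phase (z : C) : exists w : C, Num.conj w * w = 1 /\ cRe (w * z) ^+ 2 = nsq z.
Proof.
case: z => a b; rewrite /nsq /=.
have [h0|hn] := eqVneq (a ^+ 2 + b ^+ 2) 0.
  exists 1; rewrite conjC1 mulr1 mul1r; split => //=.
  have : b ^+ 2 = 0 by have := sqr_ge0 a; have := sqr_ge0 b; lra.
  lra.
have np : 0 < a ^+ 2 + b ^+ 2 by rewrite lt_def hn addr_ge0 ?sqr_ge0.
set n := Num.sqrt (a ^+ 2 + b ^+ 2).
have n0 : 0 < n by rewrite sqrtr_gt0.
have nn : n ^+ 2 = a ^+ 2 + b ^+ 2 by rewrite sqr_sqrtr // ltW.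
exists (Complex (a / n) (- b / n)); split.
  apply/eqP; rewrite eq_complex /=; apply/andP; split; apply/eqP.
    rewrite -[RHS]/(1:R).
    have nz : n ^+ 2 != 0 by rewrite expf_neq0 // gt_eqF.
    rewrite -(divff nz) [in X in _ = X / _]nn; field; lra.
  ring.
rewrite /=.
have -> : a / n * a - - b / n * b = (a ^+ 2 + b ^+ 2) / n by field; lra.
rewrite -nn; field; lra.
Qed.

Lemma KL m (M : 'M[C]_m) (x y : 'cV[C]_m) : effect M ->
  Qf 1%:M x x = 1 -> Qf 1%:M y y = 1 ->
  `|cRe (Qf M x x) - cRe (Qf M y y)| <= Num.sqrt (1 - nsq (Qf 1%:M x y)).
Proof.
move=> eM hx hy.
have [w [w1 wz]] := phase (Qf 1%:M x y).
have hy' : Qf 1%:M (w *: y) (w *: y) = 1 by rewrite QfZl QfZr hy mulr1.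
have hM : Qf M (w *: y) (w *: y) = Qf M y y by rewrite QfZl QfZr mulrA w1 mul1r.
have := KL0 eM hx hy'.
rewrite hM QfZr wz => h.
rewrite -sqrtr_sqr ler_sqrt //.
by apply: le_trans h; rewrite sqr_ge0.
Qed.


Definition vt d n (a : 'I_n -> 'cV[C]_d) : 'cV[C]_(d ^ n) :=
  castmx (erefl, exp1n n) (tpr a).

Lemma vt_adj d n (a b : 'I_n -> 'cV[C]_d) :
  adj (vt a) *m vt b = castmx (exp1n n, exp1n n) (tpr (fun j => adj (a j) *m b j)).
Proof. by rewrite /vt adj_cast castmx_mul3 tpr_adj tprM. Qed.

Lemma vt_Qf1 d n (a b : 'I_n -> 'cV[C]_d) :
  Qf 1%:M (vt a) (vt b) = \prod_(j < n) Qf 1%:M (a j) (b j).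
Proof.
rewrite /Qf mulmx1 vt_adj castmxE tpr11; apply: eq_bigr => j _.
by rewrite mulmx1.
Qed.

Lemma vt_proj d n (a : 'I_n -> 'cV[C]_d) :
  tpr (fun j => a j *m adj (a j)) = vt a *m adj (vt a).
Proof. by rewrite /vt adj_cast castmx_mul3 castmx_id tpr_adj tprM. Qed.

Lemma acc_form d n (mu : 'M[C]_(d ^ n)) (U : 'I_n.+1 -> 'M[C]_d)
  (chi : 'I_n.+1 -> 'cV[C]_d) l :
  acc_prob mu U chi l =
  cRe (Qf mu (vt (fun j => U (lift l j) *m chi (lift l j)))
             (vt (fun j => U (lift l j) *m chi (lift l j)))).
Proof.
rewrite /acc_prob tens_pow_tpr.
have -> : (fun j : 'I_n => U (lift l j) *m Defs.proj (chi (lift l j)) *m adj (U (lift l j)))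
   = (fun j => (U (lift l j) *m chi (lift l j)) *m adj (U (lift l j) *m chi (lift l j))).
  by apply/funext => j; rewrite /Defs.proj adjM !mulmxA.
rewrite vt_proj mulmxA mxtrace_mulC /Qf /mxtrace big_ord1 mulmxA.
by [].
Qed.


Lemma castmx1 n n' (e : n = n') : castmx (e, e) (1%:M : 'M[C]_n) = 1%:M.
Proof. by subst; rewrite castmx_id. Qed.

Lemma tens1 m n : (1%:M : 'M[C]_m) *t (1%:M : 'M[C]_n) = 1%:M.
Proof.
apply/matrixP => i j.
case: (mxtens_indexP i) => i1 i2; case: (mxtens_indexP j) => j1 j2.
rewrite tensmxE !mxE (inj_eq (can_inj (@mxtens_indexK _ _))) xpair_eqE.
by case: (i1 == j1); case: (i2 == j2); rewrite /= ?mulr1 ?mulr0 ?mul0r.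
Qed.

Lemma tpr1 d m : tpr (fun _ : 'I_m => (1%:M : 'M[C]_d)) = 1%:M.
Proof. by elim: m => //= m IH; rewrite IH tens1 castmx1. Qed.

Definition ephase (a : R) : C := (cos a +i* sin a)%C.

Lemma Aphase_diag k a : (0 < k)%N -> exists b : 'I_(2 ^ k) -> bool,
  forall i j, Aphase k a i j = (i == j)%:R * (if b i then ephase a else 1).
Proof.
case: k => [//|k] _ /=.
rewrite tens_pow_tpr tpr1.
exists (fun i => (mxtens_unindex (cast_ord (esym (esym (expnSr 2 k))) i)).2 == 1 :> nat).
move=> i j; rewrite castmxE !mxE.
set ci := cast_ord _ i; set cj := cast_ord _ j.
have -> : (i == j) = (mxtens_unindex ci == mxtens_unindex cj).
  by rewrite (inj_eq (can_inj (@mxtens_unindexK _ _))) (inj_eq (@cast_ord_inj _ _ _)).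
move: (mxtens_unindex ci) (mxtens_unindex cj) => [u1 u2] [v1 v2].
rewrite xpair_eqE.
case: (u1 == v1); case: (u2 =P v2) => [->|] /=; rewrite ?mul1r ?mul0r ?mulr0 //.
Qed.


Lemma Re0 : cRe 0 = 0. Proof. by []. Qed.
Lemma Im0 : cIm 0 = 0. Proof. by []. Qed.

Lemma ImD (a b : C) : cIm (a + b) = cIm a + cIm b.
Proof. by case: a => ? ?; case: b => ? ?. Qed.
Lemma ImMr (t : R) (z : C) : cIm (t%:C%C * z) = t * cIm z.
Proof. by case: z => p q /=; rewrite mul0r addr0. Qed.
Lemma conjMx (x : C) : Num.conj x * x = (nsq x)%:C%C.
Proof.
case: x => p q; apply/eqP; rewrite eq_complex /nsq /=; apply/andP; split; apply/eqP.
  by rewrite -!expr2; ring.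
by ring.
Qed.

Lemma Qf_diag n (w : 'I_n -> C) (A : 'M[C]_n) (x : 'cV[C]_n) :
  (forall i j, A i j = (i == j)%:R * w i) ->
  Qf 1%:M x (A *m x) = \sum_i (nsq (x i 0))%:C%C * w i.
Proof.
move=> hA; rewrite /Qf mulmx1 mxE; apply: eq_bigr => i _.
rewrite !mxE (bigD1 i) //= big1 => [|j nij]; last by rewrite hA eq_sym (negbTE nij) mul0r mul0r.
by rewrite hA eqxx mul1r addr0 mulrCA conjMx mulrC.
Qed.

Lemma fidA k a (eta : 'cV[C]_(2 ^ k)) : (0 < k)%N -> Qf 1%:M eta eta = 1 ->
  cos (a / 2) ^+ 2 <= nsq (Qf 1%:M eta (Aphase k a *m eta)).
Proof.
move=> hk he.
have [b hb] := Aphase_diag a hk.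
rewrite (Qf_diag _ hb).
have he' : Qf 1%:M eta (1%:M *m eta) = \sum_i (nsq (eta i 0))%:C%C * 1.
  by apply: Qf_diag => i j; rewrite !mxE mulr1.
rewrite mul1mx he in he'.
pose p i := nsq (eta i 0).
have p0 i : 0 <= p i by rewrite /p /nsq addr_ge0 ?sqr_ge0.
pose P1 := \sum_i (if b i then p i else 0).
pose P0 := \sum_i (if b i then 0 else p i).
have P10 : 0 <= P1 by apply: sumr_ge0 => i _; case: (b i).
have P00 : 0 <= P0 by apply: sumr_ge0 => i _; case: (b i).
have hsum : P0 + P1 = 1.
  have := congr1 cRe he'; rewrite (big_morph cRe ReD Re0) => H.
  rewrite -[RHS]/(cRe (1:C)) H.
  rewrite /P0 /P1 -big_split /=; apply: eq_bigr => i _.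
  by rewrite mulr1 /= mulr0 subr0; case: (b i); rewrite ?add0r ?addr0.
have hre : cRe (\sum_i (nsq (eta i 0))%:C%C * (if b i then ephase a else 1)) =
    P0 + P1 * cos a.
  rewrite (big_morph cRe ReD Re0) /P0 /P1 mulr_suml -big_split /=.
  apply: eq_bigr => i _; rewrite ReMr.
  by case: (b i); rewrite /= ?mul0r ?add0r ?mulr1 ?addr0.
have him : cIm (\sum_i (nsq (eta i 0))%:C%C * (if b i then ephase a else 1)) =
    P1 * sin a.
  rewrite (big_morph cIm ImD Im0) /P1 mulr_suml /=.
  apply: eq_bigr => i _; rewrite ImMr.
  by case: (b i); rewrite /= ?mul0r ?mulr0.
rewrite /nsq hre him.
have hc : cos a = cos (a / 2) ^+ 2 *+ 2 - 1 by rewrite -cos_mulr2n mulr2n -splitr.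
have hcs := cos2Dsin2 a.
have hc2 := cos2Dsin2 (a / 2).
rewrite mulr2n in hc.
set c2 := cos (a / 2) ^+ 2 in hc hc2 *.
have s0 := sqr_ge0 (sin (a / 2)).
have hpp : 4 * (P0 * P1) <= 1 by have := sqr_ge0 (P0 - P1); nra.
nra.
Qed.


Lemma unitU d (U : 'M[C]_d) : U \is unitarymx -> adj U *m U = 1%:M.
Proof. move=> hU; have := spectral.mulmxKtV (1%:M : 'M[C]_d) hU erefl. rewrite mul1mx -map_trmx => h; exact: h. Qed.

Lemma unit_Qf d (x : 'cV[C]_d) : unit_vec x -> Qf 1%:M x x = 1.
Proof. by rewrite /unit_vec /Qf mulmx1 => ->; rewrite mxE. Qed.

Lemma unit_a d (U : 'M[C]_d) (x : 'cV[C]_d) : U \is unitarymx -> unit_vec x ->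
  Qf 1%:M (U *m x) (U *m x) = 1.
Proof.
move=> hU hx; rewrite /Qf !mulmx1 adjM !mulmxA.
by rewrite -[adj x *m adj U *m U]mulmxA unitU // mulmx1 hx mxE.
Qed.

Lemma Qf_UU d (U : 'M[C]_d) (x y : 'cV[C]_d) : U \is unitarymx ->
  Qf 1%:M (U *m x) (U *m y) = Qf 1%:M x y.
Proof.
move=> hU; rewrite /Qf !mulmx1 adjM !mulmxA.
by rewrite -[adj x *m adj U *m U]mulmxA unitU // mulmx1.
Qed.

Lemma nsqM (z w : C) : nsq (z * w) = nsq z * nsq w.
Proof. by case: z => ? ?; case: w => ? ?; rewrite /nsq /=; ring. Qed.
Lemma nsq1 : nsq 1 = 1.
Proof. by rewrite /nsq /= expr1n expr0n /= addr0. Qed.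
Lemma nsq_ge0 z : 0 <= nsq z.
Proof. by rewrite /nsq addr_ge0 ?sqr_ge0. Qed.

Lemma Aphase_unitary k (a : R) : (0 < k)%N -> Aphase k a \is unitarymx.
Proof.
move=> hk; have [b hb] := Aphase_diag a hk.
apply/unitarymxP/matrixP => i j; rewrite !mxE.
rewrite (bigD1 i) //= big1 => [|l nil]; last by rewrite hb eq_sym (negbTE nil) mul0r mul0r.
rewrite addr0 !mxE hb eqxx mul1r hb.
have [->|nij] := eqVneq i j.
  rewrite mul1r /=.
  case: (b j); last by rewrite conjC1 mulr1.
  apply/eqP; rewrite eq_complex /ephase /=; apply/andP; split; apply/eqP.
    by rewrite -(cos2Dsin2 a) !expr2; ring.
  by ring.
by rewrite mul0r rmorph0 mulr0.
Qed.

Lemma acc_diff k n (mu : 'M[C]_((2 ^ k) ^ n)) (T : 'I_n.+1 -> 'M[C]_(2 ^ k))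
  (chi : 'I_n.+1 -> 'cV[C]_(2 ^ k)) a before l :
  (0 < k)%N -> effect mu -> (forall i, T i \is unitarymx) -> (forall i, unit_vec (chi i)) ->
  `|acc_prob mu T chi l - acc_prob mu (fun i => attacked before (Aphase k a) (T i)) chi l|
    <= Num.sqrt (1 - cos (a / 2) ^+ 2 ^+ n).
Proof.
move=> hk hmu hT hchi; rewrite !acc_form.
set A := Aphase k a.
have hb j : Qf 1%:M (attacked before A (T j) *m chi j) (attacked before A (T j) *m chi j) = 1.
  by apply: unit_a => //; rewrite /attacked; case: before; apply: mul_unitarymx => //;
    apply: Aphase_unitary.
have ha j : Qf 1%:M (T j *m chi j) (T j *m chi j) = 1 := unit_a (hT j) (hchi j).
have hpsi : Qf 1%:M (vt (fun j => T (lift l j) *m chi (lift l j)))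
                    (vt (fun j => T (lift l j) *m chi (lift l j))) = 1.
  by rewrite vt_Qf1; apply: big1 => j _; exact: ha.
have hphi : Qf 1%:M (vt (fun j => attacked before A (T (lift l j)) *m chi (lift l j)))
                    (vt (fun j => attacked before A (T (lift l j)) *m chi (lift l j))) = 1.
  by rewrite vt_Qf1; apply: big1 => j _; exact: hb.
apply: le_trans (KL hmu hpsi hphi) _.
have c20 : 0 <= cos (a / 2) ^+ 2 by apply: sqr_ge0.
have c21 : cos (a / 2) ^+ 2 <= 1 by have := cos2Dsin2 (a / 2); have := sqr_ge0 (sin (a / 2)); lra.
have cn1 : cos (a / 2) ^+ 2 ^+ n <= 1 by rewrite exprn_ile1.
rewrite ler_sqrt; last by rewrite subr_ge0.
rewrite lerD2l lerN2 vt_Qf1 (big_morph nsq nsqM nsq1).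
rewrite -[in X in X <= _](card_ord n) -prodr_const.
apply: ler_prod => j _; rewrite c20 /=.
set x := chi (lift l j); set U := T (lift l j).
clear hb hphi; rewrite /attacked; case: before.
  rewrite -mulmxA Qf_UU; last exact: hT.
  exact: fidA hk (unit_Qf (hchi _)).
by rewrite -mulmxA; exact: (fidA a hk (ha _)).
Qed.


Lemma acc_bnd d n (mu : 'M[C]_(d ^ n)) (U : 'I_n.+1 -> 'M[C]_d)
  (chi : 'I_n.+1 -> 'cV[C]_d) l :
  effect mu -> (forall i, U i \is unitarymx) -> (forall i, unit_vec (chi i)) ->
  0 <= acc_prob mu U chi l <= 1.
Proof.
move=> [p1 p2] hU hchi; rewrite acc_form.
set psi := vt _.
have hpsi : Qf 1%:M psi psi = 1.
  by rewrite vt_Qf1; apply: big1 => j _; apply: unit_a.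
have [_ h1] := ge0C (p1 psi).
have [_ h2] := ge0C (p2 psi).
move: h2; rewrite -[(adj psi *m _ *m psi) 0 0]/(Qf (1%:M - mu) psi psi) Qf1B hpsi ReB.
rewrite -[cRe (1 : C)]/(1 : R) => h2.
by rewrite -[_ 0 0]/(Qf mu psi psi) in h1; rewrite h1 /=; lra.
Qed.

Lemma rowb1 (Om : R) n (f : 'I_n.+1 -> R) : 0 <= Om -> (forall l, 0 <= f l <= 1) ->
  0 <= Om / n.+1%:R * \sum_l f l <= Om.
Proof.
move=> O0 hf.
have s0 : 0 <= \sum_l f l by apply: sumr_ge0 => l _; case/andP: (hf l).
have s1 : \sum_l f l <= n.+1%:R.
  have -> : n.+1%:R = \sum_(l < n.+1) (1 : R) by rewrite sumr_const card_ord.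
  by apply: ler_sum => l _; case/andP: (hf l).
have np : 0 < n.+1%:R :> R by rewrite ltr0n.
apply/andP; split; first by rewrite mulr_ge0 // divr_ge0 // ltW.
apply: le_trans (ler_wpM2l _ s1) _; first by rewrite divr_ge0 // ltW.
apply: eqle; field; lra.
Qed.

Lemma rowb2 (Om s : R) n (f g : 'I_n.+1 -> R) : 0 <= Om ->
  (forall l, `|f l - g l| <= s) ->
  `|Om / n.+1%:R * \sum_l f l - Om / n.+1%:R * \sum_l g l| <= Om * s.
Proof.
move=> O0 hfg.
have np : 0 < n.+1%:R :> R by rewrite ltr0n.
rewrite -mulrBr -sumrB normrM ger0_norm; last by rewrite divr_ge0 // ltW.
have s1 : `|\sum_l (f l - g l)| <= n.+1%:R * s.
  apply: le_trans (ler_norm_sum _ _ _) _.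
  have -> : n.+1%:R * s = \sum_(l < n.+1) s by rewrite sumr_const card_ord mulr_natl.
  by apply: ler_sum => l _.
apply: le_trans (ler_wpM2l _ s1) _; first by rewrite divr_ge0 // ltW.
apply: eqle; field; lra.
Qed.

End Q.
Theorem mainTheorem1 (R : realType) (k : nat) (hk : (0 < k)%N)
  (Omega : nat -> R)
  (T : forall n : nat, 'I_n.+1 -> 'M[R[i]]_(2 ^ k))
  (chi : forall n : nat, 'I_n.+1 -> 'cV[R[i]]_(2 ^ k))
  (mu : forall n : nat, 'M[R[i]]_((2 ^ k) ^ n))
  (alpha : R) (before : bool) :
  (forall n, 0 <= Omega n) ->
  series Omega @ \oo --> (1 : R) ->
  cvgn (series ((fun n => n%:R * Omega n) : R^nat)) ->
  (forall n i, T n i \is unitarymx) ->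
  (forall n i, unit_vec (chi n i)) ->
  (forall n, effect (mu n)) ->
  let N := limn (series ((fun n => n%:R * Omega n) : R^nat)) in
  let pH := overall_prob Omega
              (fun n l => acc_prob (mu n) (T n) (chi n) l) in
  let pD := overall_prob Omega
              (fun n l => acc_prob (mu n)
                 (fun i => attacked before (Aphase k alpha) (T n i)) (chi n) l) in
  `|pH - pD| <= Num.sqrt (1 - (cos (alpha / 2) ^+ 2) `^ N).
Proof.
move=> O0 HO cN hT hchi hmu /=.
rewrite /overall_prob.
have hAU n i : attacked before (Aphase k alpha) (T n i) \is unitarymx.
  by rewrite /attacked; case: before; apply: mul_unitarymx => //; apply: Aphase_unitary.
apply: jensen => //.
- apply/andP; split; first exact: sqr_ge0.
  by have := cos2Dsin2 (alpha / 2); have := sqr_ge0 (sin (alpha / 2)); lra.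
- by move=> n; apply: rowb1 => // l; apply: acc_bnd.
- by move=> n; apply: rowb1 => // l; apply: acc_bnd.
- by move=> n; apply: rowb2 => // l; apply: acc_diff.
Qed.
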